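(* Let $H$ be a locally compact abelian group, $X$ a compact metric space, $\sigma=(\sigma_1,\dots,\sigma_k)$ a $k$-tuple of pairwise commuting surjective local homeomorphisms of $X$, and $\varphi=(\varphi_1,\dots,\varphi_k)$ a $k$-tuple in $C(X,H)$. The following are equivalent: (1) $\varphi_i+\varphi_j\circ\sigma_i=\varphi_j+\varphi_i\circ\sigma_j$ for all $i,j\in\{1,\dots,k\}$; (2) there exists a unique continuous $H$-valued $1$-cocycle $c$ on $\mathcal{G}(X,\sigma)$ with $c(x,\mathbf{e}_i,\sigma_i(x))=\varphi_i(x)$ for all $i\in\{1,\dots,k\}$ and $x\in X$. Moreover, every continuous $H$-valued $1$-cocycle on $\mathcal{G}(X,\sigma)$ arises in this way from some $k$-tuple $\varphi$ satisfying (1), and a continuous $1$-cocycle $c$ on $\mathcal{G}(X,\sigma)$ is a coboundary if and only if there exists $\psi\in C(X,H)$ with $c(x,\mathbf{e}_i,\sigma_i(x))=\psi(x)-\psi(\sigma_i(x))$ for all $i\in\{1,\dots,k\}$ and $x\in X$.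
   Context: For $n=(n_1,\dots,n_k)\in\mathbb{N}^k$ write $\sigma^n=\sigma_1^{n_1}\circ\cdots\circ\sigma_k^{n_k}$, and $\mathbf{e}_i$ for the canonical generators of $\mathbb{N}^k$. The groupoid $\mathcal{G}(X,\sigma)=\{(x,p-q,y)\in X\times\mathbb{Z}^k\times X : p,q\in\mathbb{N}^k,\ \sigma^p(x)=\sigma^q(y)\}$ has unit space $X$ (via $x\mapsto(x,0,x)$), $r(x,n,y)=x$, $s(x,n,y)=y$, $(x,m,y)^{-1}=(y,-m,x)$, $(x,m,y)(y,n,z)=(x,m+n,z)$, and topology with basis $U\times\{p-q\}\times V$ for $U,V\subseteq X$ open with $\sigma^p(U)=\sigma^q(V)$; it is an étale locally compact Hausdorff groupoid. A continuous $H$-valued $1$-cocycle on a topological groupoid $\mathcal{G}$ is a continuous map $c:\mathcal{G}\to H$ with $c(\gamma\gamma')=c(\gamma)+c(\gamma')$ for composable pairs; it is a coboundary if $c(\gamma)=f(r(\gamma))-f(s(\gamma))$ for some continuous $f$ on the unit space. *)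

(* Defs.v *)
From HB Require Import structures.
From mathcomp Require Import all_boot all_order all_algebra.
From mathcomp Require Import all_classical all_reals all_analysis.
Set Implicit Arguments. Unset Strict Implicit. Unset Printing Implicit Defensive.
Import Order.TTheory GRing.Theory Num.Theory.
Local Open Scope classical_set_scope.
Local Open Scope ring_scope.

Definition Zk (k : nat) := {ffun 'I_k -> int}.

Definition evec (k : nat) (i : 'I_k) : Zk k := [ffun j => ((j == i) : nat)%:Z].

Definition nat_diff (k : nat) (p q : 'I_k -> nat) : Zk k :=
  [ffun j => (p j)%:Z - (q j)%:Z].

Definition sigma_pow (X : Type) (k : nat) (sigma : 'I_k -> X -> X)
  (n : 'I_k -> nat) : X -> X :=
  foldr (fun j f => iter (n j) (sigma j) \o f) id (enum 'I_k).

(* local homeomorphism: continuous, and every point has an open neighbourhood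
   U on which f is injective and open (hence a homeomorphism onto the open
   set f(U)) *)
Definition local_homeo (X : topologicalType) (f : X -> X) : Prop :=
  continuous f /\
  forall x, exists U : set X, [/\ open U, U x, set_inj U f &
     forall W, open W -> W `<=` U -> open (f @` W)].

Definition inG (X : Type) (k : nat) (sigma : 'I_k -> X -> X)
  (g : X * Zk k * X) : Prop :=
  exists p q : 'I_k -> nat,
    g.1.2 = nat_diff p q /\ sigma_pow sigma p g.1.1 = sigma_pow sigma q g.2.

Definition DRgroupoid (X : Type) (k : nat) (sigma : 'I_k -> X -> X) :=
  {g : X * Zk k * X | inG sigma g}.

Definition grng X k sigma (g : @DRgroupoid X k sigma) : X := (proj1_sig g).1.1.
Definition gsrc X k sigma (g : @DRgroupoid X k sigma) : X := (proj1_sig g).2.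
Definition gdeg X k sigma (g : @DRgroupoid X k sigma) : Zk k := (proj1_sig g).1.2.

Definition Zbasic X k (sigma : 'I_k -> X -> X) (U V : set X)
  (p q : 'I_k -> nat) : set (DRgroupoid sigma) :=
  [set g | U (grng g) /\ V (gsrc g) /\ gdeg g = nat_diff p q /\
           sigma_pow sigma p (grng g) = sigma_pow sigma q (gsrc g)].

(* continuity of a map on G(X,sigma) for the topology with basis the sets
   Z(U,p,q,V), U V open with sigma^p(U) = sigma^q(V) *)
Arguments Zbasic {X k} sigma U V p q _.

Definition groupoid_continuous (X T : topologicalType) k
  (sigma : 'I_k -> X -> X) (c : DRgroupoid sigma -> T) : Prop :=
  forall (g : DRgroupoid sigma) (W : set T), nbhs (c g) W ->
    exists (U V : set X) (p q : 'I_k -> nat),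
      [/\ open U, open V, (sigma_pow sigma p) @` U = (sigma_pow sigma q) @` V,
          Zbasic sigma U V p q g & Zbasic sigma U V p q `<=` c @^-1` W].

(* algebraic 1-cocycle: c(gamma gamma') = c(gamma) + c(gamma') for composable
   gamma = (x,m,y), gamma' = (y,n,z), with gamma gamma' = (x, m+n, z) *)
Definition is_cocycle X k (sigma : 'I_k -> X -> X) (H : zmodType)
  (c : DRgroupoid sigma -> H) : Prop :=
  forall (x y z : X) (m n : Zk k) (h1 : inG sigma (x, m, y))
    (h2 : inG sigma (y, n, z)) (h3 : inG sigma (x, m + n, z)),
    c (exist _ (x, m + n, z) h3) = c (exist _ _ h1) + c (exist _ _ h2).

Definition is_cont_cocycle (X : topologicalType) k (sigma : 'I_k -> X -> X)
  (H : topologicalZmodType) (c : DRgroupoid sigma -> H) : Prop :=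
  is_cocycle c /\ groupoid_continuous c.

Definition is_coboundary (X : topologicalType) k (sigma : 'I_k -> X -> X)
  (H : topologicalZmodType) (c : DRgroupoid sigma -> H) : Prop :=
  exists f : X -> H, continuous f /\
    forall g : DRgroupoid sigma, c g = f (grng g) - f (gsrc g).

(* sigma^{e_i} = sigma_i *)
Lemma sigma_pow_foldr X k (sigma : 'I_k -> X -> X) (i : 'I_k) (s : seq 'I_k) x :
  uniq s ->
  foldr (fun j f => iter ((j == i) : nat) (sigma j) \o f) id s x =
  if i \in s then sigma i x else x.
Proof.
elim: s => [|j s IH] //= /andP[js us].
rewrite in_cons IH //.
case: (eqVneq j i) => [eji|ji] /=.
  by subst j; rewrite (negbTE js).
by [].
Qed.

Lemma inG_gen X k (sigma : 'I_k -> X -> X) (i : 'I_k) (x : X) :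
  inG sigma (x, evec i, sigma i x).
Proof.
exists (fun j => ((j == i) : nat)), (fun _ => 0%N); split.
  by apply/ffunP => j; rewrite /evec /nat_diff !ffunE subr0.
rewrite /sigma_pow sigma_pow_foldr ?enum_uniq // mem_enum /=.
elim: (enum 'I_k) => //.
Qed.

Definition ggen X k (sigma : 'I_k -> X -> X) (i : 'I_k) (x : X)
  : DRgroupoid sigma := exist _ (x, evec i, sigma i x) (inG_gen sigma i x).

Arguments ggen {X k} sigma i x.

(* Main.v *)
Require Import Defs.
From HB Require Import structures.
From mathcomp Require Import all_boot all_order all_algebra.
From mathcomp Require Import all_classical all_reals all_analysis.
From mathcomp Require Import zify.
Import Order.TTheory GRing.Theory Num.Theory.
Local Open Scope classical_set_scope.
Local Open Scope ring_scope.
Set Implicit Arguments. Unset Strict Implicit.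


Fixpoint walk (X : Type) k (sigma : 'I_k -> X -> X) (s : seq 'I_k) (x : X) : X :=
  if s is i :: t then walk sigma t (sigma i x) else x.

Fixpoint PhiS (X : Type) (H : zmodType) k (sigma : 'I_k -> X -> X)
  (phi : 'I_k -> X -> H) (s : seq 'I_k) (x : X) : H :=
  if s is i :: t then phi i x + PhiS sigma phi t (sigma i x) else 0.

Definition degS k (s : seq 'I_k) : Zk k := [ffun j => (count_mem j s)%:Z].

Definition Lp k (p : 'I_k -> nat) : seq 'I_k :=
  foldr (fun j acc => acc ++ nseq (p j) j) [::] (enum 'I_k).

Lemma walk_cat X k (sigma : 'I_k -> X -> X) s t x :
  walk sigma (s ++ t) x = walk sigma t (walk sigma s x).
Proof. by elim: s x => //= i s IH x. Qed.

Lemma PhiS_cat X (H : zmodType) k (sigma : 'I_k -> X -> X) (phi : 'I_k -> X -> H) s t x :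
  PhiS sigma phi (s ++ t) x = PhiS sigma phi s x + PhiS sigma phi t (walk sigma s x).
Proof. by elim: s x => /= [|i s IH] x; rewrite ?add0r // IH addrA. Qed.

Lemma walk_comm X k (sigma : 'I_k -> X -> X) :
  (forall i j, sigma i \o sigma j = sigma j \o sigma i) ->
  forall i s x, sigma i (walk sigma s x) = walk sigma s (sigma i x).
Proof.
move=> C i s; elim: s => //= j s IH x.
by rewrite IH; congr walk; move: (C i j) => /(congr1 (fun f => f x)).
Qed.

Lemma perm_split (T : eqType) (i : T) s t :
  perm_eq (i :: s) t -> exists t1 t2, t = t1 ++ i :: t2 /\ perm_eq s (t1 ++ t2).
Proof.
move=> P; have it : i \in t by rewrite -(perm_mem P) mem_head.
move: P; case/splitPr: it => t1 t2 P; exists t1, t2; split => //.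
by rewrite -(perm_cons i) (permPl P) -cat1s perm_catCA.
Qed.

Lemma walk_perm X k (sigma : 'I_k -> X -> X) :
  (forall i j, sigma i \o sigma j = sigma j \o sigma i) ->
  forall s t, perm_eq s t -> forall x, walk sigma s x = walk sigma t x.
Proof.
move=> C; elim=> [|i s IH] t P x.
  by move: P; rewrite perm_sym => /perm_nilP ->.
have [t1 [t2 [-> P']]] := perm_split P.
rewrite /= (IH _ P') !walk_cat /= walk_comm //.
Qed.

Lemma PhiS_swap X (H : zmodType) k (sigma : 'I_k -> X -> X) (phi : 'I_k -> X -> H) :
  (forall i j, sigma i \o sigma j = sigma j \o sigma i) ->
  (forall i j x, phi i x + phi j (sigma i x) = phi j x + phi i (sigma j x)) ->
  forall i t x, PhiS sigma phi t x + phi i (walk sigma t x) =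
                phi i x + PhiS sigma phi t (sigma i x).
Proof.
move=> C E i; elim=> [|j t IH] x /=; first by rewrite add0r addr0.
rewrite -addrA IH addrA -E -addrA.
by move: (C i j) => /(congr1 (fun f => f x)) /= ->.
Qed.

Lemma PhiS_perm X (H : zmodType) k (sigma : 'I_k -> X -> X) (phi : 'I_k -> X -> H) :
  (forall i j, sigma i \o sigma j = sigma j \o sigma i) ->
  (forall i j x, phi i x + phi j (sigma i x) = phi j x + phi i (sigma j x)) ->
  forall s t, perm_eq s t -> forall x, PhiS sigma phi s x = PhiS sigma phi t x.
Proof.
move=> C E; elim=> [|i s IH] t P x.
  by move: P; rewrite perm_sym => /perm_nilP ->.
have [t1 [t2 [-> P']]] := perm_split P.
rewrite /= (IH _ P') !PhiS_cat /= [RHS]addrA (PhiS_swap C E).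
by rewrite walk_comm // addrA.
Qed.

Lemma count_Lp k (p : 'I_k -> nat) j : count_mem j (Lp p) = p j.
Proof.
rewrite /Lp.
have : forall r : seq 'I_k, uniq r ->
  count_mem j (foldr (fun j acc => acc ++ nseq (p j) j) [::] r) = if j \in r then p j else 0%N.
  elim=> //= i r IH /andP[ir ur]; rewrite count_cat IH // count_nseq in_cons /=.
  case: (eqVneq j i) => [->|ji] /=; first by rewrite (negbTE ir) mul1n.
  by rewrite mul0n addn0.
by move/(_ _ (enum_uniq _)) ->; rewrite mem_enum.
Qed.

Lemma walk_nseq X k (sigma : 'I_k -> X -> X) n j x :
  walk sigma (nseq n j) x = iter n (sigma j) x.
Proof. by elim: n x => //= n IH x; rewrite IH -iterSr. Qed.

Lemma walk_Lp X k (sigma : 'I_k -> X -> X) p x :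
  walk sigma (Lp p) x = sigma_pow sigma p x.
Proof.
rewrite /Lp /sigma_pow; elim: (enum 'I_k) x => //= j r IH x.
by rewrite walk_cat IH walk_nseq.
Qed.

Lemma perm_count k (s t : seq 'I_k) :
  (forall j, count_mem j s = count_mem j t) -> perm_eq s t.
Proof. by move=> E; apply/allP => j _ /=; apply/eqP; apply: E. Qed.



Lemma zalg (H : zmodType) (a b c d e f : H) :
  e + b = f + d -> a + b - (c + d) = (a - e) + (f - c).
Proof.
move=> K; have -> : b = f + d - e by rewrite -K addrAC subrr add0r.
rewrite opprD !addrA.
rewrite (addrAC _ (- c)) (addrAC _ (- e) (- d)) addrK.
by rewrite (addrAC a f).
Qed.

Definition Comm X k (sigma : 'I_k -> X -> X) :=
  forall i j, sigma i \o sigma j = sigma j \o sigma i.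

Lemma c_ext X k (sigma : 'I_k -> X -> X) T (c : DRgroupoid sigma -> T)
  g g' (h : inG sigma g) (h' : inG sigma g') :
  g = g' -> c (exist _ g h) = c (exist _ g' h').
Proof. by move=> E; subst g'; congr c; congr exist; apply: Prop_irrelevance. Qed.

Lemma degS_cons k (i : 'I_k) s : degS (i :: s) = evec i + degS s.
Proof. by apply/ffunP => j; rewrite !ffunE /= PoszD eq_sym. Qed.

Lemma degS_cat k (s t : seq 'I_k) : degS (s ++ t) = degS s + degS t.
Proof. by apply/ffunP => j; rewrite !ffunE /= count_cat PoszD. Qed.

Lemma degS_nil k : degS ([::] : seq 'I_k) = 0.
Proof. by apply/ffunP => j; rewrite !ffunE. Qed.

Lemma nat_diff_Lp k (p q : 'I_k -> nat) : nat_diff p q = degS (Lp p) - degS (Lp q).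
Proof. by apply/ffunP => j; rewrite !ffunE !count_Lp. Qed.

Lemma inG_walk X k (sigma : 'I_k -> X -> X) : Comm sigma ->
  forall s x, inG sigma (x, degS s, walk sigma s x).
Proof.
move=> C s x; exists (fun j => count_mem j s), (fun _ => 0%N); split.
  by apply/ffunP => j; rewrite !ffunE subr0.
rewrite /= -!walk_Lp (walk_perm C (_ : perm_eq (Lp (fun=> 0%N)) [::])) /=.
  by apply: walk_perm => //; apply: perm_count => j; rewrite count_Lp.
by apply: perm_count => j; rewrite count_Lp.
Qed.

Definition phic X k (sigma : 'I_k -> X -> X) (H : zmodType)
  (c : DRgroupoid sigma -> H) i x := c (ggen sigma i x).

Lemma cocycle_path X k (sigma : 'I_k -> X -> X) (H : zmodType)
  (c : DRgroupoid sigma -> H) : Comm sigma -> is_cocycle c ->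
  forall s x (h : inG sigma (x, degS s, walk sigma s x)),
    c (exist _ _ h) = PhiS sigma (phic c) s x.
Proof.
move=> C cc; elim=> [|i s IH] x h /=.
  have h3 : inG sigma (x, degS [::] + degS [::], x) by rewrite {2}degS_nil addr0; exact: h.
  have := cc x x x _ _ h h h3.
  rewrite (@c_ext _ _ _ _ _ _ (x, degS [::], x) h3 h); last by rewrite degS_nil addr0.
  by move/eqP; rewrite -subr_eq subrr eq_sym => /eqP.
have h3 : inG sigma (x, evec i + degS s, walk sigma s (sigma i x)).
  by rewrite -degS_cons; apply: inG_walk.
rewrite (c_ext c h h3); last by rewrite degS_cons.
rewrite (cc _ _ _ _ _ (inG_gen sigma i x) (inG_walk C s (sigma i x))).
by rewrite IH.
Qed.

Lemma cocycle_formula X k (sigma : 'I_k -> X -> X) (H : zmodType)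
  (c : DRgroupoid sigma -> H) : Comm sigma -> is_cocycle c ->
  forall (g : DRgroupoid sigma) s t, gdeg g = degS s - degS t ->
    walk sigma s (grng g) = walk sigma t (gsrc g) ->
    c g = PhiS sigma (phic c) s (grng g) - PhiS sigma (phic c) t (gsrc g).
Proof.
move=> C cc [[[x m] y] h] s t /= Em Ew.
rewrite /grng /gsrc /gdeg /= in Em Ew *; subst m.
have h3 : inG sigma (x, degS s - degS t + degS t, walk sigma t y).
  by rewrite subrK -Ew; apply: inG_walk.
have := cc _ _ _ _ _ h (inG_walk C t y) h3.
rewrite (c_ext c h3 (inG_walk C s x)); last first.
  by rewrite subrK Ew.
rewrite !cocycle_path // => ->.
by rewrite addrK.
Qed.

Lemma cocycle_unique X k (sigma : 'I_k -> X -> X) (H : zmodType)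
  (c1 c2 : DRgroupoid sigma -> H) : Comm sigma -> is_cocycle c1 -> is_cocycle c2 ->
  (forall i x, c1 (ggen sigma i x) = c2 (ggen sigma i x)) -> c1 = c2.
Proof.
move=> C h1 h2 E; apply: funext => g.
have [p [q [E1 E2]]] := proj2_sig g.
have e1 : gdeg g = degS (Lp p) - degS (Lp q) by rewrite -nat_diff_Lp.
have e2 : walk sigma (Lp p) (grng g) = walk sigma (Lp q) (gsrc g) by rewrite !walk_Lp.
rewrite (cocycle_formula C h1 e1 e2) (cocycle_formula C h2 e1 e2).
have -> : phic c1 = phic c2 by apply: funext => i; apply: funext => x; apply: E.
by [].
Qed.



Definition CondE X (H : zmodType) k (sigma : 'I_k -> X -> X) (phi : 'I_k -> X -> H) :=
  forall i j x, phi i x + phi j (sigma i x) = phi j x + phi i (sigma j x).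

Lemma gen_comm X k (sigma : 'I_k -> X -> X) (H : zmodType)
  (c : DRgroupoid sigma -> H) : Comm sigma -> is_cocycle c -> CondE sigma (phic c).
Proof.
move=> C cc i j x.
have := cocycle_path C cc (inG_walk C [:: i; j] x).
rewrite (c_ext c (inG_walk C [:: i; j] x) (inG_walk C [:: j; i] x)).
  by rewrite cocycle_path //= !addr0.
congr (_, _, _).
  by apply/ffunP => l; rewrite !ffunE /= addnCA.
by rewrite /=; move: (C j i) => /(congr1 (fun f => f x)) /= ->.
Qed.

Lemma pcatC (T : eqType) (s t : seq T) : perm_eq (s ++ t) (t ++ s).
Proof. by rewrite perm_catC perm_refl. Qed.

Lemma wd X (H : zmodType) k (sigma : 'I_k -> X -> X) (phi : 'I_k -> X -> H) :
  Comm sigma -> CondE sigma phi ->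
  forall s t s' t' x y, walk sigma s x = walk sigma t y ->
  walk sigma s' x = walk sigma t' y ->
  degS s - degS t = degS s' - degS t' ->
  PhiS sigma phi s x - PhiS sigma phi t y = PhiS sigma phi s' x - PhiS sigma phi t' y.
Proof.
move=> C E s t s' t' x y W W' D.
have step : forall a b a' x y, walk sigma a x = walk sigma b y ->
   PhiS sigma phi a x - PhiS sigma phi b y =
   PhiS sigma phi (a ++ a') x - PhiS sigma phi (b ++ a') y.
  move=> a b a' x0 y0 Wab; rewrite !PhiS_cat Wab opprD addrACA subrr addr0 //.
rewrite (step _ _ s' _ _ W) (step _ _ s _ _ W').
rewrite (PhiS_perm C E (pcatC s s')).
rewrite (PhiS_perm C E (_ : perm_eq (t ++ s') (t' ++ s))) //.
apply: perm_count => j; rewrite !count_cat.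
have := congr1 (fun f : Zk k => f j) D; rewrite !ffunE /= => Dj.
apply/eqP; rewrite -eqz_nat !PoszD; apply/eqP. move: Dj. set a := Posz _. set b := Posz _. set c := Posz _. set d := Posz _. move=> Dj. lia.
Qed.

Lemma wit_ex X k (sigma : 'I_k -> X -> X) (g : DRgroupoid sigma) :
  exists pq : ('I_k -> nat) * ('I_k -> nat),
    gdeg g = nat_diff pq.1 pq.2 /\ sigma_pow sigma pq.1 (grng g) = sigma_pow sigma pq.2 (gsrc g).
Proof. by case: g => [[[x m] y] [p [q [E1 E2]]]]; exists (p, q). Qed.

Definition wit X k (sigma : 'I_k -> X -> X) (g : DRgroupoid sigma) :=
  proj1_sig (cid (wit_ex g)).

Definition c0 X (H : zmodType) k (sigma : 'I_k -> X -> X) (phi : 'I_k -> X -> H)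
  (g : DRgroupoid sigma) : H :=
  PhiS sigma phi (Lp (wit g).1) (grng g) - PhiS sigma phi (Lp (wit g).2) (gsrc g).

Lemma c0_eq X (H : zmodType) k (sigma : 'I_k -> X -> X) (phi : 'I_k -> X -> H) :
  Comm sigma -> CondE sigma phi ->
  forall (g : DRgroupoid sigma) s t, gdeg g = degS s - degS t ->
    walk sigma s (grng g) = walk sigma t (gsrc g) ->
    c0 phi g = PhiS sigma phi s (grng g) - PhiS sigma phi t (gsrc g).
Proof.
move=> C E g s t D W; rewrite /c0.
have [D' W'] := proj2_sig (cid (wit_ex g)).
apply: wd => //; first by rewrite !walk_Lp.
by rewrite -nat_diff_Lp -D'.
Qed.

Lemma c0_cocycle X (H : zmodType) k (sigma : 'I_k -> X -> X) (phi : 'I_k -> X -> H) :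
  Comm sigma -> CondE sigma phi -> is_cocycle (c0 (sigma:=sigma) phi).
Proof.
move=> C E x y z m n h1 h2 h3.
have [p1 [q1 [D1 W1]]] := h1; have [p2 [q2 [D2 W2]]] := h2.
rewrite /= -!walk_Lp nat_diff_Lp in D1 W1; rewrite /= -!walk_Lp nat_diff_Lp in D2 W2.
set s1 := Lp p1 in D1 W1; set t1 := Lp q1 in D1 W1.
set s2 := Lp p2 in D2 W2; set t2 := Lp q2 in D2 W2.
rewrite (@c0_eq _ _ _ _ _ C E (exist _ _ h1) s1 t1) //.
rewrite (@c0_eq _ _ _ _ _ C E (exist _ _ h2) s2 t2) //.
rewrite (@c0_eq _ _ _ _ _ C E (exist _ _ h3) (s1 ++ s2) (t2 ++ t1)); last first.
- rewrite /grng /gsrc /= !walk_cat W1 -W2 -!walk_cat.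
  by apply: walk_perm => //; apply: pcatC.
- rewrite /gdeg /= D1 D2 !degS_cat.
  by apply/ffunP => j; rewrite !ffunE; lia.
rewrite /grng /gsrc /= !PhiS_cat.
apply: zalg.
rewrite W1 -W2 -!PhiS_cat; apply: PhiS_perm => //; apply: pcatC.
Qed.

Lemma c0_gen X (H : zmodType) k (sigma : 'I_k -> X -> X) (phi : 'I_k -> X -> H) :
  Comm sigma -> CondE sigma phi ->
  forall i x, c0 phi (ggen sigma i x) = phi i x.
Proof.
move=> C E i x.
rewrite (@c0_eq _ _ _ _ _ C E _ [:: i] [::]) //=.
  by rewrite addr0 subr0.
by rewrite /gdeg /= degS_nil subr0 degS_cons degS_nil addr0.
Qed.



Lemma lh_open (X : topologicalType) (f : X -> X) : local_homeo f ->
  forall W, open W -> open (f @` W).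
Proof.
move=> [_ lh] W oW; rewrite openE => _ [w Ww <-].
have [U [oU Uw _ oim]] := lh w.
have o2 : open (f @` (W `&` U)) by apply: oim; [exact: openI | by move=> a []].
apply: (@filterS _ _ _ (f @` (W `&` U))).
  by move=> _ [a [Wa _] <-]; exists a.
by apply: open_nbhs_nbhs; split => //; exists w.
Qed.

Lemma walk_cont (X : topologicalType) k (sigma : 'I_k -> X -> X) :
  (forall i, continuous (sigma i)) -> forall s, continuous (walk sigma s).
Proof.
move=> cs; elim=> [|i s IH] /=; first by move=> x; apply: cvg_id.
move=> x; apply: (@continuous_comp _ _ _ (sigma i) (walk sigma s)); [exact: cs | exact: IH].
Qed.

Lemma walk_open (X : topologicalType) k (sigma : 'I_k -> X -> X) :
  (forall i W, open W -> open (sigma i @` W)) ->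
  forall s W, open W -> open (walk sigma s @` W).
Proof.
move=> os; elim=> [|i s IH] W oW /=.
  by rewrite image_id.
have -> : (fun x => walk sigma s (sigma i x)) @` W = walk sigma s @` (sigma i @` W).
  by rewrite -image_comp.
by apply: IH; apply: os.
Qed.

Lemma contD (T : topologicalType) (H : topologicalZmodType) (f g : T -> H) :
  continuous f -> continuous g -> continuous (fun x => f x + g x).
Proof.
move=> cf cg x.
apply: (@continuous_comp _ _ _ (fun x => (f x, g x)) (fun z : H * H => z.1 + z.2)).
  by apply: cvg_pair; [exact: cf | exact: cg].
exact: add_continuous.
Qed.

Lemma PhiS_cont (X : topologicalType) (H : topologicalZmodType) k
  (sigma : 'I_k -> X -> X) (phi : 'I_k -> X -> H) :
  (forall i, continuous (sigma i)) -> (forall i, continuous (phi i)) ->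
  forall s, continuous (PhiS sigma phi s).
Proof.
move=> cs cp; elim=> [|i s IH] /=; first by move=> x; apply: cvg_cst.
apply: contD => //; move=> x.
apply: (@continuous_comp _ _ _ (sigma i) (PhiS sigma phi s)); [exact: cs | exact: IH].
Qed.

Lemma img_lemma (X : Type) (P : X -> X) (U0 S : set X) :
  P @` (U0 `&` P @^-1` (P @` U0 `&` S)) = P @` U0 `&` S.
Proof.
apply/seteqP; split.
  by move=> _ [a [_ Pa] <-].
move=> _ [[a U0a <-] Sa]; exists a => //; split => //; split => //; exists a.
Qed.

Lemma contB (T : topologicalType) (H : topologicalZmodType) (f g : T -> H) :
  continuous f -> continuous g -> continuous (fun x => f x - g x).
Proof.
move=> cf cg x.
apply: (@continuous_comp _ _ _ (fun x => (f x, g x)) (fun z : H * H => z.1 - z.2)).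
  by apply: cvg_pair; [exact: cf | exact: cg].
exact: sub_continuous.
Qed.

Lemma c0_cont (X : topologicalType) (H : topologicalZmodType) k
  (sigma : 'I_k -> X -> X) (phi : 'I_k -> X -> H) :
  Comm sigma -> CondE sigma phi -> (forall i, continuous (sigma i)) ->
  (forall i W, open W -> open (sigma i @` W)) -> (forall i, continuous (phi i)) ->
  groupoid_continuous (c0 (sigma:=sigma) phi).
Proof.
move=> C E cs os cp g W nW.
have [p [q [D R]]] := proj2_sig g.
set F := PhiS sigma phi (Lp p); set G := PhiS sigma phi (Lp q).
have e : forall g' : DRgroupoid sigma, gdeg g' = nat_diff p q ->
    sigma_pow sigma p (grng g') = sigma_pow sigma q (gsrc g') ->
    c0 phi g' = F (grng g') - G (gsrc g').
  move=> g' D' R'; apply: c0_eq => //; first by rewrite -nat_diff_Lp.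
  by rewrite !walk_Lp.
have hc : continuous (fun z : X * X => F z.1 - G z.2).
  apply: contB => z.
    apply: (@continuous_comp _ _ _ fst F); first exact: cvg_fst.
    exact: PhiS_cont.
  apply: (@continuous_comp _ _ _ snd G); first exact: cvg_snd.
  exact: PhiS_cont.
have nW' : nbhs (F (grng g) - G (gsrc g)) W by rewrite -e.
have [[A B] /= [nA nB] AB] := hc (grng g, gsrc g) W nW'.
move: nA nB; rewrite !nbhsE => -[U0 [oU0 U0x] sU0] [V0 [oV0 V0y] sV0].
have eP : forall r, sigma_pow sigma r = walk sigma (Lp r).
  by move=> r; apply: funext => z; rewrite walk_Lp.
set P := sigma_pow sigma p; set Q := sigma_pow sigma q.
have cP : continuous P by rewrite /P eP; apply: walk_cont.
have cQ : continuous Q by rewrite /Q eP; apply: walk_cont.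
have oP : open (P @` U0) by rewrite /P eP; apply: walk_open.
have oQ : open (Q @` V0) by rewrite /Q eP; apply: walk_open.
set O := P @` U0 `&` Q @` V0.
exists (U0 `&` P @^-1` O), (V0 `&` Q @^-1` (Q @` V0 `&` P @` U0)), p, q; split.
- apply: openI => //; move/continuousP : cP; apply; exact: openI.
- apply: openI => //; move/continuousP : cQ; apply; exact: openI.
- by rewrite !img_lemma setIC.
- split; [split=> //; split; [by exists (grng g) | by rewrite /P R; exists (gsrc g)]|].
  split; [split=> //; split; [by exists (gsrc g) | by rewrite /Q -R; exists (grng g)]|].
  by split.
- move=> g' [[U0g' _] [[V0g' _] [Dg' Rg']]].
  rewrite /preimage /= e //.
  by apply: (AB (grng g', gsrc g')); split; [apply: sU0 | apply: sV0].
Qed.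

Lemma pow_gen k (p q : 'I_k -> nat) (i : 'I_k) X (sigma : 'I_k -> X -> X) :
  Comm sigma -> nat_diff p q = evec i ->
  forall z, sigma_pow sigma p z = sigma_pow sigma q (sigma i z).
Proof.
move=> C D z; rewrite -!walk_Lp.
rewrite (walk_perm C (_ : perm_eq (Lp p) (i :: Lp q))) //.
apply: perm_count => j; rewrite /= !count_Lp.
have := congr1 (fun f : Zk k => f j) D; rewrite !ffunE /= eq_sym.
case: (i == j) => /= Dj; lia.
Qed.

Lemma phic_cont (X : topologicalType) (H : topologicalZmodType) k
  (sigma : 'I_k -> X -> X) (c : DRgroupoid sigma -> H) :
  Comm sigma -> (forall i, continuous (sigma i)) -> groupoid_continuous c ->
  forall i, continuous (phic c i).
Proof.
move=> C cs gc i x W nW.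
have [U [V [p [q [oU oV _ [Ux [Vy [D R]]] sub]]]]] := gc (ggen sigma i x) W nW.
apply: (@filterS _ _ _ (U `&` sigma i @^-1` V)).
  move=> x' [Ux' Vx']; apply: (sub (ggen sigma i x')).
  split => //; split => //; split => //.
  exact: pow_gen.
apply: open_nbhs_nbhs; split; last by split.
apply: openI => //; move/continuousP : (cs i); apply; exact: oV.
Qed.


Unset Implicit Arguments.

Theorem proposition3p8
  (H : topologicalZmodType) (R : realType) (X : pseudoMetricType R) (k : nat)
  (sigma : 'I_k -> X -> X) (phi : 'I_k -> X -> H) :
  hausdorff_space H -> locally_compact [set: H] ->
  hausdorff_space X -> compact [set: X] ->
  (forall i j, sigma i \o sigma j = sigma j \o sigma i) ->
  (forall i (y : X), exists x, sigma i x = y) ->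
  (forall i, local_homeo (sigma i)) ->
  (forall i, continuous (phi i)) ->
  [/\
    (forall i j x, phi i x + phi j (sigma i x) = phi j x + phi i (sigma j x))
      <-> (exists! c : DRgroupoid sigma -> H,
             is_cont_cocycle c /\ forall i x, c (ggen sigma i x) = phi i x),
    (forall c : DRgroupoid sigma -> H, is_cont_cocycle c ->
       exists phi' : 'I_k -> X -> H,
         [/\ forall i, continuous (phi' i),
             forall i j x,
               phi' i x + phi' j (sigma i x) = phi' j x + phi' i (sigma j x) &
             forall i x, c (ggen sigma i x) = phi' i x]) &
    (forall c : DRgroupoid sigma -> H, is_cont_cocycle c ->
       is_coboundary c <->
       exists psi : X -> H, continuous psi /\
         forall i x, c (ggen sigma i x) = psi x - psi (sigma i x))].
Proof.
move=> _ _ _ _ C _ lh cp.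
have cs : forall i, continuous (sigma i) by move=> i; case: (lh i).
have os : forall i W, open W -> open (sigma i @` W) by move=> i; apply: lh_open.
split.
- split.
  + move=> E; exists (c0 (sigma:=sigma) phi); split.
      split; first by split; [exact: c0_cocycle | exact: c0_cont].
      exact: c0_gen.
    move=> c' [[cc' _] gen']; apply: cocycle_unique => //; first exact: c0_cocycle.
    by move=> i x; rewrite c0_gen // gen'.
  + move=> [c [[[cc _] gen] _]] i j x.
    by have := gen_comm C cc i j x; rewrite /phic !gen.
- move=> c [cc gc]; exists (phic c); split.
  + exact: phic_cont.
  + exact: gen_comm.
  + by [].
- move=> c [cc gc]; split.
  + by move=> [f [cf Ef]]; exists f; split => // i x; rewrite Ef.
  + move=> [psi [cpsi Epsi]]; exists psi; split => //.
    set d := fun g : DRgroupoid sigma => psi (grng g) - psi (gsrc g).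
    have dc : is_cocycle d.
      by move=> x y z m n h1 h2 h3; rewrite /d /grng /gsrc /= addrA subrK.
    have -> : c = d by apply: cocycle_unique.
    by [].
Qed.
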